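(* In the construction below, for every directed path $\langle(u_0,0),(u_1,1),\dots,(u_K,K)\rangle$ in $\mathcal D$ from the root to level $K$, $$\sum_{k=0}^{K-1}\log\big(1/\theta_{(u_k,k)(u_{k+1},k+1)}\big)\le 3\log n.$$ In particular $\Delta_I(\hat{\mathcal D})\le3\log n$.
   Context: Construction. Let $(X,d)$ be a metric space with $n=|X|\ge2$ and $\mathrm{diam}(X)=1$. For $S\subseteq X$, $r\ge0$: $B_X(S,r):=\{x\in X:\exists s\in S,\ d(x,s)\le r\}$ and $B_X(x,r):=B_X(\{x\},r)$. Let $\varepsilon_0:=\min\{d(x,y):x\ne y\}$, $\tau:=12$, $K:=1+\lceil\log_\tau(1/\varepsilon_0)\rceil$. For $\eta>0$ the greedy $\eta$-net is built as: $N_0=\emptyset$; for $j\ge1$, $S_j:=X\setminus B_X(N_{j-1},\eta)$; if $S_j=\emptyset$ output $N_{j-1}$; else pick $x_j\in S_j$ maximizing $|B_X(x,\eta/3)|$ and set $N_j=N_{j-1}\cup\{x_j\}$. For $k=0,\dots,K$ let $U_k$ be the greedy $\tau^{-k}$-net (so $U_0$ is a single point and $U_K=X$). For $k<K$, $A_k$ is the set of pairs $(u,u')\in U_k\times U_{k+1}$ with (i) $d(u,u')\le4\tau^{-k}$ and (ii) $|B_X(u,\tau^{-k}/3)|\ge\max\{|B_X(w,\tau^{-k}/3)|:w\in B_X(u',6\tau^{-(k+1)})\}$. The directed graph $\mathcal D$ has vertex set $\{(u,k):u\in U_k,\ 0\le k\le K\}$, arcs $((u,k),(u',k+1))$ for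 $(u,u')\in A_k$, root $(u,0)$ with $U_0=\{u\}$, and the vertices $(x,K)$ are identified with $x\in X$. Arc weights: $\omega_{(u,k)(u',k+1)}:=10\tau^{-k}$ and $\theta_{(u,k)(u',k+1)}:=|B_X(u',\tau^{-(k+1)}/3)|\big/\sum_{w:(u,w)\in A_k}|B_X(w,\tau^{-(k+1)}/3)|$. $\hat{\mathcal D}=(\mathcal D,\omega,\theta)$; $\Delta_I(\hat{\mathcal D})$ is the maximum over root-to-level-$K$ paths $\gamma$ of $\log(1/\prod_{a\in\gamma}\theta_a)$. *)

(* Defs.v *)
From HB Require Import structures.
From mathcomp Require Import all_boot all_order all_algebra.
From mathcomp Require Import reals exp.
Set Implicit Arguments. Unset Strict Implicit. Unset Printing Implicit Defensive.
Import Order.TTheory GRing.Theory Num.Theory.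
Local Open Scope ring_scope.

Section Defs.
Variables (R : realType) (T : finType) (d : T -> T -> R).

Definition is_metric : Prop :=
  [/\ (forall x y, 0 <= d x y),
      (forall x y, d x y = 0 <-> x = y),
      (forall x y, d x y = d y x) &
      (forall x y z, d x z <= d x y + d y z)].

Definition cball (x : T) (r : R) : {set T} := [set y | d x y <= r].

Definition cballS (S : seq T) (r : R) : {set T} :=
  [set y | has (fun s => d s y <= r) S].

(* N = [:: x_1; ...; x_m] is an output of the greedy eta-net procedure,
   for SOME tie-breaking choice at each step:
   each x_j lies outside B(N_{j-1}, eta) and maximizes |B(x, eta/3)| among
   the points outside B(N_{j-1}, eta); the procedure stops when
   B(N, eta) = X. *)
Definition greedy_net (eta : R) (N : seq T) : Prop :=
  (forall N1 x N2, N = N1 ++ x :: N2 ->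
     x \notin cballS N1 eta /\
     (forall y, y \notin cballS N1 eta ->
        (#|cball y (eta / 3)| <= #|cball x (eta / 3)|)%N)) /\
  [set: T] \subset cballS N eta.

Definition tau : R := 12%:R.
Definition lev (k : nat) : R := tau ^- k.

Definition arcA (U : nat -> seq T) (k : nat) (u u' : T) : bool :=
  [&& u \in U k, u' \in U k.+1, d u u' <= 4 * lev k &
      [forall w, (w \in cball u' (6 * lev k.+1)) ==>
         (#|cball w (lev k / 3)| <= #|cball u (lev k / 3)|)%N]].

Definition theta (U : nat -> seq T) (k : nat) (u u' : T) : R :=
  (#|cball u' (lev k.+1 / 3)|)%:R /
  (\sum_(w | arcA U k u w) #|cball w (lev k.+1 / 3)|)%:R.

End Defs.

(* K = 1 + ceil(log_tau(1/eps0)) (nonnegative since eps0 <= diam = 1) *)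
Definition Kdepth (R : realType) (eps0 : R) : nat :=
  (1 + `|Num.ceil (ln (eps0^-1) / ln (tau R))|)%N.

(* Main.v *)
Require Import Defs.
From HB Require Import structures.
From mathcomp Require Import all_boot all_order all_algebra.
From mathcomp Require Import reals exp.
Import Order.TTheory GRing.Theory Num.Theory.
Local Open Scope ring_scope.

Lemma sum_disj (T:finType) (P: pred T) (B: T -> {set T}) (S:{set T}) :
  (forall w y, P w -> y \in B w -> y \in S) ->
  (forall w w' y, P w -> P w' -> y \in B w -> y \in B w' -> w = w') ->
  (\sum_(w | P w) #|B w| <= #|S|)%N.
Proof.
move=> HS Hu.
under eq_bigr => w _ do rewrite -sum1_card big_mkcond /=.
rewrite exchange_big /= -sum1_card big_mkcond /=.
rewrite [X in (_ <= X)%N]big_mkcond; apply: leq_sum => y _.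
case: (pickP (fun w => P w && (y \in B w))) => [w0 /andP[Pw0 yw0] | none].
  rewrite (bigD1 w0) //= yw0 (HS w0 y Pw0 yw0) big1 // => w /andP[Pw ne].
  by case: ifP => // yw; move: ne; rewrite (Hu w w0 y) ?eqxx.
rewrite big1 // => w Pw; case: ifP => // yw; by move: (none w); rewrite Pw yw.
Qed.

Lemma sep (R : realType) (T : finType) (d : T -> T -> R) eta N w w' :
  is_metric d -> greedy_net d eta N -> w \in N -> w' \in N -> w != w' -> eta < d w w'.
Proof.
move=> [_ _ dsym _] [Hg _].
have key : forall a b p1 p2, N = p1 ++ b :: p2 -> a \in p1 -> eta < d a b.
  move=> a b p1 p2 E ap1; have [nb _] := Hg _ _ _ E.
  move: nb; rewrite inE => /hasPn /(_ a ap1); by rewrite ltNge.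
move=> wN w'N ne; case/splitPr E: {1}N / w'N => [p1 p2].
move: wN; rewrite E mem_cat in_cons (negbTE ne) /= => /orP[wp1|wp2].
  exact: (key w w' p1 p2).
case/splitPr E2: {1}p2 / wp2 => [q1 q2]; rewrite dsym.
apply: (key w' w (p1 ++ w' :: q1) q2); first by rewrite E E2 -catA.
by rewrite mem_cat in_cons eqxx orbT.
Qed.

From mathcomp Require Import lra.
Lemma levS (R : realType) k : lev R k.+1 = lev R k / 12%:R.
Proof. by rewrite /lev /tau exprS invfM mulrC. Qed.
Lemma lev_gt0 (R : realType) k : 0 < lev R k.
Proof. by rewrite /lev invr_gt0 exprn_gt0 // /tau ltr0n. Qed.

Lemma tele (R : realType) (f : nat -> R) K :
  \sum_(k < K) (f k - f k.+3) = f 0%N + f 1%N + f 2%N - f K - f K.+1 - f K.+2.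
Proof.
elim: K => [|K IH]; first by rewrite big_ord0; lra.
rewrite big_ord_recr /= IH; lra.
Qed.

Theorem lemma3p5 (R : realType) (T : finType) (d : T -> T -> R) (eps0 : R)
    (U : nat -> seq T) (u : nat -> T) :
  is_metric d ->
  (2 <= #|T|)%N ->
  (* diam(X) = 1 *)
  (forall x y, d x y <= 1) -> (exists x y, d x y = 1) ->
  (* eps0 = min distance between distinct points *)
  (forall x y, x != y -> eps0 <= d x y) ->
  (exists x y, x != y /\ d x y = eps0) ->
  (* U k is a greedy tau^{-k}-net, k = 0..K *)
  (forall k, (k <= Kdepth eps0)%N -> greedy_net d (lev R k) (U k)) ->
  (* <(u 0,0),...,(u K,K)> is a directed path in D from the root *)
  (forall k, (k < Kdepth eps0)%N -> arcA d U k (u k) (u k.+1)) ->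
  \sum_(k < Kdepth eps0) ln ((theta d U k (u k) (u k.+1))^-1)
    <= 3 * ln (#|T|%:R : R).
Proof.
move=> Hm Hn _ _ _ _ Hnet Harc.
have Hm' := Hm; case: Hm' => [d0 d0E dsym dtri].
set K := Kdepth eps0.
set n := #|T|.
pose g j := #|cball d (u j) (lev R j / 3)|.
pose D k := (\sum_(w | arcA d U k (u k) w) #|cball d w (lev R k.+1 / 3)|)%N.
have g1 : forall j, (0 < g j)%N.
  move=> j; apply/card_gt0P; exists (u j); rewrite inE.
  have -> : d (u j) (u j) = 0 by apply/d0E.
  by rewrite divr_ge0 ?ltW ?lev_gt0.
have gn : forall j, (g j <= n)%N by move=> j; exact: max_card.
have Dge : forall k, (k < K)%N -> (g k.+1 <= D k)%N.
  by move=> k kK; rewrite /D (bigD1 (u k.+1)) ?Harc //= leq_addr.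
have uniq_ : forall k w w' y, (k < K)%N -> arcA d U k (u k) w -> arcA d U k (u k) w' ->
    y \in cball d w (lev R k.+1 / 3) -> y \in cball d w' (lev R k.+1 / 3) -> w = w'.
  move=> k w w' y kK /and4P[_ wU _ _] /and4P[_ w'U _ _]; rewrite !inE => h1 h2.
  apply/eqP; apply/negPn/negP => ne.
  have := @sep _ _ d _ _ w w' Hm (Hnet k.+1 kK) wU w'U ne.
  have := dtri w y w'; rewrite (dsym y w') => t.
  have := lev_gt0 R k.+1; lra.
have Dn : forall k, (k < K)%N -> (D k <= n)%N.
  move=> k kK; rewrite /n -cardsT; apply: sum_disj => //.
  by move=> w w' y ? ?; apply: uniq_.
have D2 : forall m, (m.+2 < K)%N -> (D m.+2 <= g m)%N.
  move=> m mK.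
  apply: (@leq_trans #|cball d (u m.+2) (lev R m / 3)|).
    apply: sum_disj; last by move=> w w' y ? ?; apply: uniq_.
    move=> w y /and4P[_ _ dw _]; rewrite !inE => dy.
    have := dtri (u m.+2) w y; move: dw dy; rewrite !levS.
    have := lev_gt0 R m; lra.
  have /and4P[_ _ _ /forallP /(_ (u m.+2))] := Harc m (ltnW (ltnW mK)).
  move/implyP; apply; rewrite inE.
  have /and4P[_ _ h _] := Harc m.+1 (ltnW mK).
  have := lev_gt0 R m.+1; lra.
have pos : forall m : nat, (0 < m)%N -> (m%:R : R) \in Num.pos.
  by move=> m m0; rewrite posrE ltr0n.
have Hth : forall k, (k < K)%N ->
    ln ((theta d U k (u k) (u k.+1))^-1) = ln (D k)%:R - ln (g k.+1)%:R.
  move=> k kK.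
  have pg := pos _ (g1 k.+1).
  have pD := pos _ (leq_trans (g1 k.+1) (Dge k kK)).
  have pgV : ((g k.+1)%:R : R)^-1 \in Num.pos by rewrite posrE invr_gt0 -posrE.
  by rewrite /theta invf_div (lnM pD pgV) (lnV pg).
pose H i := if (i < 2)%N then ln (n%:R : R) else ln (g (i - 2)%N)%:R.
have lnmono : forall a b : nat, (0 < a)%N -> (a <= b)%N -> ln (a%:R : R) <= ln b%:R.
  move=> a b a0 ab; rewrite ler_ln ?ler_nat //; apply: pos => //.
  exact: leq_trans ab.
have H0 : forall i, 0 <= H i.
  move=> i; rewrite /H; case: ifP => _; apply: ln_ge0; rewrite ler1n //.
  exact: ltnW.
have Hle : forall i, H i <= ln (n%:R : R).
  move=> i; rewrite /H; case: ifP => _ //; exact: lnmono.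
apply: (@le_trans _ _ (\sum_(k < K) (H k - H k.+3))).
  apply: ler_sum => [[k kK]] _ /=; rewrite Hth //.
  have -> : H k.+3 = ln (g k.+1)%:R by [].
  rewrite lerD2r /H; case: ifP => k2.
    apply: lnmono; [exact: leq_trans (g1 k.+1) (Dge k kK) | exact: Dn].
  case: k k2 kK => [|[|m]] //= _ mK; rewrite subn2 /=.
  apply: lnmono; [exact: leq_trans (g1 m.+3) (Dge _ mK) | exact: D2].
rewrite tele.
have := H0 K; have := H0 K.+1; have := H0 K.+2; have := Hle 2%N.
have -> : H 0%N = ln (n%:R : R) by [].
have -> : H 1%N = ln (n%:R : R) by [].
lra.
Qed.
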